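(* Let $\alpha,\beta,\gamma>0$ with $\gamma^2-\alpha\beta>0$ and $n\ge2$. Then $Z_n^{\mathcal{GS}}=Z_n$, where $Z_n$ is the partition function of the six-vertex model on $\mathbb{T}_n$ with weights $a_1=1$, $a_2=\gamma^2-\alpha\beta$, $b_1=\beta$, $b_2=\alpha$, $c_1=c_2=\gamma$. In particular $Z_n^{\mathcal{GS}}>0$.
   Context: Six-vertex model on $\mathbb{T}_n=(\mathbb{Z}/n\mathbb{Z})^2$: orientations of edges with two in and two out at each vertex; vertex types (weights): type 1 ($a_1$): horizontal right, vertical up; type 2 ($a_2$): horizontal left, vertical down; type 3 ($b_1$): horizontal right, vertical down; type 4 ($b_2$): horizontal left, vertical up; type 5 ($c_1$): horizontal in, vertical out; type 6 ($c_2$): horizontal out, vertical in. $Z_n=\sum_\sigma\prod_v(\text{weight of type at }v)$. Snakes: $e^1=(1,0)$, $e^2=(0,1)$, $e^3=\frac12(e^1+e^2)$; mid-edges $\mathbb{M}_n$ = black $\{v+\frac12e^1\}$ ⊔ white $\{v+\frac12e^2\}$, $v\in\mathbb{T}_n$, mod $n$. A generalised snake configuration is a permutation $\bar\rho$ of $\mathbb{M}_n$ with $\bar\rho(x)\in\{x,x+e^3,x+e^1\}$ ($x$ black), $\bar\rho(x)\in\{x,x+e^3,x+e^2\}$ ($x$ white); $\mathcal{GS}_n$ their set. $S(\bar\rho)$ = number of vertices $v$ with $\bar\rho(v-\frac12e^1)=v+\frac12e^1$ and $\bar\rho(v-\frac12e^2)=v+\frac12e^2$; $A,B,C$ = numbers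 of $x$ with $\bar\rho(x)=x+e^1$, $x+e^2$, $x+e^3$ respectively. $Z_n^{\mathcal{GS}}=\sum_{\bar\rho\in\mathcal{GS}_n}(-1)^{S(\bar\rho)}\alpha^{A(\bar\rho)}\beta^{B(\bar\rho)}\gamma^{C(\bar\rho)}$. *)

(* Defs.v *)
From HB Require Import structures.
From mathcomp Require Import all_boot all_order all_algebra all_fingroup.
Set Implicit Arguments. Unset Strict Implicit. Unset Printing Implicit Defensive.
Import Order.TTheory GRing.Theory Num.Theory.
Local Open Scope ring_scope.

Definition vert (n : nat) := ('Z_n * 'Z_n)%type.

(* Mid-edges M_n: (true, v) is the black mid-edge v + e1/2,
   (false, v) is the white mid-edge v + e2/2. *)
Definition mid (n : nat) := (bool * vert n)%type.

Definition addE1 n (x : mid n) : mid n := (x.1, (x.2.1 + 1, x.2.2)).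
Definition addE2 n (x : mid n) : mid n := (x.1, (x.2.1, x.2.2 + 1)).
(* x + e3 with e3 = (e1+e2)/2 *)
Definition addE3 n (x : mid n) : mid n :=
  if x.1 then (false, (x.2.1 + 1, x.2.2)) else (true, (x.2.1, x.2.2 + 1)).

Definition is_gsnake n (rho : {perm mid n}) : bool :=
  [forall x : mid n,
     if x.1 then rho x \in [:: x; addE3 x; addE1 x]
     else rho x \in [:: x; addE3 x; addE2 x]].

Definition snakeS n (rho : {perm mid n}) : nat :=
  #|[set v : vert n | (rho (true, (v.1 - 1, v.2)) == (true, v))
                      && (rho (false, (v.1, v.2 - 1)) == (false, v))]|.
Definition snakeA n (rho : {perm mid n}) : nat := #|[set x : mid n | rho x == addE1 x]|.
Definition snakeB n (rho : {perm mid n}) : nat := #|[set x : mid n | rho x == addE2 x]|.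
Definition snakeC n (rho : {perm mid n}) : nat := #|[set x : mid n | rho x == addE3 x]|.

Definition ZGS (R : comRingType) (n : nat) (alpha beta gamma : R) : R :=
  \sum_(rho : {perm mid n} | is_gsnake rho)
     (-1) ^+ snakeS rho * alpha ^+ snakeA rho * beta ^+ snakeB rho
       * gamma ^+ snakeC rho.

(* Edge orientations: for sigma : {ffun mid n -> bool},
   sigma (true, v) = true  iff the horizontal edge {v, v+e1} points right,
   sigma (false, v) = true iff the vertical edge {v, v+e2} points up. *)
Definition hL n (s : {ffun mid n -> bool}) (v : vert n) := s (true, (v.1 - 1, v.2)).
Definition hR n (s : {ffun mid n -> bool}) (v : vert n) := s (true, v).
Definition vB n (s : {ffun mid n -> bool}) (v : vert n) := s (false, (v.1, v.2 - 1)).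
Definition vT n (s : {ffun mid n -> bool}) (v : vert n) := s (false, v).

(* ice rule: two incoming and two outgoing edges at v *)
Definition ice n (s : {ffun mid n -> bool}) (v : vert n) : bool :=
  (hL s v + ~~ hR s v + vB s v + ~~ vT s v == 2)%N.

Definition vweight (R : comRingType) n (a1 a2 b1 b2 c1 c2 : R)
  (s : {ffun mid n -> bool}) (v : vert n) : R :=
  match hL s v, hR s v, vB s v, vT s v with
  | true, true, true, true => a1      (* right, up *)
  | false, false, false, false => a2  (* left, down *)
  | true, true, false, false => b1    (* right, down *)
  | false, false, true, true => b2    (* left, up *)
  | true, false, false, true => c1    (* horizontal in, vertical out *)
  | false, true, true, false => c2    (* horizontal out, vertical in *)
  | _, _, _, _ => 0
  end.

Definition Z6 (R : comRingType) (n : nat) (a1 a2 b1 b2 c1 c2 : R) : R :=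
  \sum_(s : {ffun mid n -> bool} | [forall v : vert n, ice s v])
     \prod_(v : vert n) vweight a1 a2 b1 b2 c1 c2 s v.

(* Main.v *)
Require Import Defs.
From HB Require Import structures.
From mathcomp Require Import all_boot all_order all_algebra all_fingroup.
Import Order.TTheory GRing.Theory Num.Theory.
Local Open Scope ring_scope.
Set Implicit Arguments. Unset Strict Implicit.

Definition code := ('I_3 * 'I_3)%type.

Lemma zn_neq1 n (w : 'Z_n) : (w + 1 == w) = false.
Proof. by rewrite -subr_eq0 addrAC subrr add0r oner_eq0. Qed.
Lemma zn_neq1' n (w : 'Z_n) : (w == w + 1) = false.
Proof. by rewrite eq_sym zn_neq1. Qed.
Lemma zn_neqm1 n (w : 'Z_n) : (w - 1 == w) = false.
Proof. by rewrite -subr_eq0 addrAC subrr add0r oppr_eq0 oner_eq0. Qed.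
Lemma zn_neqm1' n (w : 'Z_n) : (w == w - 1) = false.
Proof. by rewrite eq_sym zn_neqm1. Qed.

Definition tgt n (x : mid n) : vert n :=
  if x.1 then (x.2.1 + 1, x.2.2) else (x.2.1, x.2.2 + 1).
Definition kd n (g : {ffun vert n -> code}) (x : mid n) : nat :=
  if x.1 then (g (tgt x)).1 else (g (tgt x)).2.
Definition dir (b : bool) (k : nat) : bool := if b then k == 1%N else k == 2%N.
Definition dec n (g : {ffun vert n -> code}) (x : mid n) : mid n :=
  if kd g x == 0%N then x else (dir x.1 (kd g x), tgt x).
Definition stays n (g : {ffun vert n -> code}) (x : mid n) : bool := kd g x == 0%N.
Definition Lm n (v : vert n) : mid n := (true, (v.1 - 1, v.2)).
Definition Bm n (v : vert n) : mid n := (false, (v.1, v.2 - 1)).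
Definition candL n (g : {ffun vert n -> code}) b v : bool :=
  ((g v).1 != 0%N :> nat) && (dir true (g v).1 == b).
Definition candB n (g : {ffun vert n -> code}) b v : bool :=
  ((g v).2 != 0%N :> nat) && (dir false (g v).2 == b).

Lemma dec_pre n (g : {ffun vert n -> code}) x b v : dec g x = (b, v) ->
  [\/ x = (b, v) /\ stays g (b, v), x = Lm v /\ candL g b v
    | x = Bm v /\ candB g b v].
Proof.
case: x => [bx [w1 w2]]; case: v => [v1 v2].
rewrite /dec /stays /candL /candB /Lm /Bm /kd /tgt /=.
case: bx => /=.
- case: eqP => [k0 [<- <- <-]|k0 [<- <- <-]]; first by constructor 1; split => //; apply/eqP.
  constructor 2; rewrite addrK; split => //. by rewrite eqxx andbT; apply/eqP.
- case: eqP => [k0 [<- <- <-]|k0 [<- <- <-]]; first by constructor 1; split => //; apply/eqP.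
  constructor 3; rewrite addrK; split => //. by rewrite eqxx andbT; apply/eqP.
Qed.

Lemma dec_post n (g : {ffun vert n -> code}) b v :
  [/\ stays g (b, v) -> dec g (b, v) = (b, v),
      candL g b v -> dec g (Lm v) = (b, v) &
      candB g b v -> dec g (Bm v) = (b, v)].
Proof.
case: v => [v1 v2]; rewrite /dec /stays /candL /candB /Lm /Bm /kd /tgt /=.
split.
- by move=> ->.
- by rewrite subrK => /andP[/negbTE -> /eqP ->].
- by rewrite subrK => /andP[/negbTE -> /eqP ->].
Qed.

Definition Qy n (g : {ffun vert n -> code}) (y : mid n) : bool :=
  (candL g y.1 y.2 + candB g y.1 y.2 + stays g y == 1)%N.
Definition decf n (g : {ffun vert n -> code}) : {ffun mid n -> mid n} :=
  [ffun x => dec g x].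

Lemma bool3 (a b s : bool) : [|| a, b | s] -> ~~ (a && b) -> ~~ (a && s) ->
  ~~ (b && s) -> (a + b + s == 1)%N.
Proof. by case: a; case: b; case: s. Qed.

Lemma L1 n (g : {ffun vert n -> code}) :
  injectiveb (decf g) = [forall y, Qy g y].
Proof.
apply/injectiveP/forallP => [inj [b v]|Q x1 x2].
- have [dS dL dB] := dec_post g b v.
  have inj' : injective (dec g) by move=> x y; rewrite -!(ffunE (dec g)); apply: inj.
  rewrite /Qy /=; apply: bool3.
  + have [f _ fK] := injF_bij inj'.
    case: (dec_pre (fK (b, v))) => [[_ ->]|[_ ->]|[_ ->]]; by rewrite ?orbT.
  + apply/negP => /andP[/dL e1 /dB e2]; have := inj' _ _ (etrans e1 (esym e2)).
    by rewrite /Lm /Bm; case.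
  + apply/negP => /andP[/dL e1 /dS e2]; have := inj' _ _ (etrans e1 (esym e2)).
    case: v {dS dL dB e1 e2} => v1 v2; rewrite /Lm /=; case=> _ /eqP.
    by rewrite zn_neqm1.
  + apply/negP => /andP[/dB e1 /dS e2]; have := inj' _ _ (etrans e1 (esym e2)).
    case: v {dS dL dB e1 e2} => v1 v2; rewrite /Bm /=; case=> _ /eqP.
    by rewrite zn_neqm1.
- rewrite !ffunE; case E: (dec g x1) => [b v] E2.
  have Qbv := Q (b, v); rewrite /Qy /= in Qbv.
  case: (dec_pre E) => [[-> H1]|[-> H1]|[-> H1]];
  case: (dec_pre (esym E2)) => [[-> H2]|[-> H2]|[-> H2]] //;
  by move: Qbv H1 H2; case: (candL g b v); case: (candB g b v); case: (stays g (b,v)).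
Qed.

Definition Ploc (c : code) (hl hr vb vt : bool) : bool :=
  [&& ((c.1 : nat) == 0%N) == hl, ((c.2 : nat) == 0%N) == vb,
      ((c.1 == 1%N :> nat) + (c.2 == 2%N :> nat) + hr == 1)%N &
      ((c.1 == 2%N :> nat) + (c.2 == 1%N :> nat) + vt == 1)%N].

Definition staysf n (g : {ffun vert n -> code}) : {ffun mid n -> bool} :=
  [ffun x => stays g x].

Lemma candE n (g : {ffun vert n -> code}) v :
  [/\ candL g true v = ((g v).1 == 1%N :> nat), candB g true v = ((g v).2 == 2%N :> nat),
      candL g false v = ((g v).1 == 2%N :> nat) & candB g false v = ((g v).2 == 1%N :> nat)].
Proof.
rewrite /candL /candB /dir.
by case: (g v) => [[[|[|[|k1]]] h1] [[|[|[|k2]]] h2]].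
Qed.

Lemma L2 n (g : {ffun vert n -> code}) (s : {ffun mid n -> bool}) :
  (staysf g == s) && [forall y, Qy g y]
  = [forall v, Ploc (g v) (hL s v) (hR s v) (vB s v) (vT s v)].
Proof.
apply/andP/forallP => [[/eqP <- /forallP Q] [v1 v2]|H].
  have := Q (true, (v1, v2)); have := Q (false, (v1, v2)).
  have [c1 c2 c3 c4] := candE g (v1, v2).
  rewrite /Ploc /Qy /= c1 c2 c3 c4 /hL /hR /vB /vT !ffunE /stays /kd /tgt /= !subrK.
  by move=> -> ->; rewrite !eqxx.
have es : staysf g = s.
  apply/ffunP => -[[] [w1 w2]]; rewrite ffunE /stays /kd /tgt /=.
    by have := H (w1 + 1, w2); rewrite /Ploc /hL /= addrK => /and4P[/eqP-> _ _ _].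
  by have := H (w1, w2 + 1); rewrite /Ploc /vB /= addrK => /and4P[_ /eqP-> _ _].
split; first by rewrite es.
apply/forallP => -[[] [v1 v2]]; have := H (v1, v2);
  have [c1 c2 c3 c4] := candE g (v1, v2);
  rewrite /Ploc /Qy /= ?c1 ?c2 ?c3 ?c4 /hR /vT /= -es !ffunE;
  by case/and4P.
Qed.

Lemma decE n (g : {ffun vert n -> code}) x : dec g x =
  if kd g x == 0%N then x else if kd g x == 1%N then (if x.1 then addE1 x else addE2 x)
  else addE3 x.
Proof.
case: x => [[] [w1 w2]]; rewrite /dec /kd /dir /tgt /addE1 /addE2 /addE3 /=.
  by case: (g _).1 => [[|[|[|k]]] //= hk].
by case: (g _).2 => [[|[|[|k]]] //= hk].
Qed.

Lemma gs_dec n (g : {ffun vert n -> code}) x :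
  if x.1 then dec g x \in [:: x; addE3 x; addE1 x]
  else dec g x \in [:: x; addE3 x; addE2 x].
Proof.
rewrite decE; case: x => [[] w] /=;
by case: ifP; rewrite ?inE ?eqxx ?orbT //; case: ifP; rewrite ?inE ?eqxx ?orbT.
Qed.

Definition cd n (f : mid n -> mid n) (x : mid n) : 'I_3 :=
  if f x == x then ord0 else if f x == addE3 x then inord 2 else inord 1.
Definition enc n (f : mid n -> mid n) : {ffun vert n -> code} :=
  [ffun v => (cd f (Lm v), cd f (Bm v))].

Lemma kd_enc n (f : mid n -> mid n) x : kd (enc f) x = cd f x.
Proof. by case: x => [[] [w1 w2]]; rewrite /kd /enc ffunE /tgt /Lm /Bm /= addrK. Qed.

Lemma enc_ext n (f f' : mid n -> mid n) : f =1 f' -> enc f = enc f'.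
Proof. by move=> e; apply/ffunP => v; rewrite !ffunE /cd !e. Qed.

Lemma dec_enc n (f : mid n -> mid n) :
  (forall x, if x.1 then f x \in [:: x; addE3 x; addE1 x]
             else f x \in [:: x; addE3 x; addE2 x]) -> dec (enc f) =1 f.
Proof.
move=> H x; rewrite decE kd_enc /cd; have := H x.
case: (f x =P x) => [->|ne] //=.
case: (f x =P addE3 x) => [->|ne3] /=; first by rewrite inordK.
rewrite inordK // !inE; case: (x.1) => /=.
  by case/or3P => /eqP.
by case/or3P => /eqP.
Qed.

Lemma neqs n (x : mid n) :
  [/\ (addE1 x == x) = false, (addE2 x == x) = false, (addE3 x == x) = false,
      (addE1 x == addE3 x) = false & (addE2 x == addE3 x) = false].
Proof.
case: x => [[] [w1 w2]]; rewrite /addE1 /addE2 /addE3 /= !xpair_eqE /=;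
by rewrite ?zn_neq1 ?andbF.
Qed.

Lemma cd_dec n (g : {ffun vert n -> code}) x : val (cd (dec g) x) = kd g x.
Proof.
have [n1 n2 n3 n13 n23] := neqs x.
have hk : (kd g x < 3)%N by rewrite /kd; case: (x.1).
rewrite /cd decE; case: (kd g x) hk => [|[|[|k]]] // hk /=.
- by rewrite eqxx.
- by case: (x.1); rewrite ?n1 ?n2 ?n13 ?n23 inordK.
- by rewrite n3 eqxx inordK.
Qed.

Lemma enc_dec n (g : {ffun vert n -> code}) : enc (dec g) = g.
Proof.
apply/ffunP => -[v1 v2]; rewrite ffunE; case E: (g (v1, v2)) => [c1 c2].
congr (_, _); apply: val_inj; rewrite cd_dec /kd /tgt /Lm /Bm /= subrK E //.
Qed.

Definition hperm n (g : {ffun vert n -> code}) : {perm mid n} := insubd (1%g : {perm mid n}) (decf g).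

Lemma hpermE n (g : {ffun vert n -> code}) : injectiveb (decf g) -> hperm g =1 dec g.
Proof. by move=> hi x; rewrite /hperm -pvalE insubdK // ffunE. Qed.

Lemma hpermN n (g : {ffun vert n -> code}) : ~~ injectiveb (decf g) -> hperm g = 1%g.
Proof. by move=> hi; apply: val_inj; rewrite /hperm val_insubd (negbTE hi). Qed.

Lemma PA n (g : {ffun vert n -> code}) w1 w2 :
  (dec g (true, (w1, w2)) == addE1 (true, (w1, w2))) = ((g (w1 + 1, w2)).1 == 1%N :> nat)
  /\ (dec g (false, (w1, w2)) == addE1 (false, (w1, w2))) = false.
Proof.
rewrite /dec /kd /dir /tgt /addE1 /=; split.
  by case: (g _).1 => [[|[|[|k]]] //= hk]; rewrite /= ?xpair_eqE ?eqxx ?zn_neq1' ?zn_neq1 ?andbF.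
by case: (g _).2 => [[|[|[|k]]] //= hk]; rewrite /= ?xpair_eqE ?eqxx ?zn_neq1' ?zn_neq1 ?andbF.
Qed.

Lemma PB n (g : {ffun vert n -> code}) w1 w2 :
  (dec g (true, (w1, w2)) == addE2 (true, (w1, w2))) = false
  /\ (dec g (false, (w1, w2)) == addE2 (false, (w1, w2))) = ((g (w1, w2 + 1)).2 == 1%N :> nat).
Proof.
rewrite /dec /kd /dir /tgt /addE2 /=; split.
  by case: (g _).1 => [[|[|[|k]]] //= hk]; rewrite /= ?xpair_eqE ?eqxx ?zn_neq1' ?zn_neq1 ?andbF.
by case: (g _).2 => [[|[|[|k]]] //= hk]; rewrite /= ?xpair_eqE ?eqxx ?zn_neq1' ?zn_neq1 ?andbF.
Qed.

Lemma PC n (g : {ffun vert n -> code}) w1 w2 :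
  (dec g (true, (w1, w2)) == addE3 (true, (w1, w2))) = ((g (w1 + 1, w2)).1 == 2%N :> nat)
  /\ (dec g (false, (w1, w2)) == addE3 (false, (w1, w2))) = ((g (w1, w2 + 1)).2 == 2%N :> nat).
Proof.
rewrite /dec /kd /dir /tgt /addE3 /=; split.
  by case: (g _).1 => [[|[|[|k]]] //= hk]; rewrite /= ?xpair_eqE ?eqxx ?zn_neq1' ?zn_neq1 ?andbF.
by case: (g _).2 => [[|[|[|k]]] //= hk]; rewrite /= ?xpair_eqE ?eqxx ?zn_neq1' ?zn_neq1 ?andbF.
Qed.

Lemma PS n (g : {ffun vert n -> code}) v1 v2 :
  (dec g (true, (v1 - 1, v2)) == (true, (v1, v2))) &&
  (dec g (false, (v1, v2 - 1)) == (false, (v1, v2)))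
  = ((g (v1, v2)).1 == 1%N :> nat) && ((g (v1, v2)).2 == 1%N :> nat).
Proof.
rewrite /dec /kd /dir /tgt /= !subrK.
by case: (g _) => [[[|[|[|k1]]] h1] [[|[|[|k2]]] h2]];
  rewrite /= ?xpair_eqE ?eqxx ?zn_neqm1 ?andbF.
Qed.

Definition lw (R : comRingType) (al be ga : R) (c : code) : R :=
  (-1) ^+ ((c.1 == 1%N :> nat) && (c.2 == 1%N :> nat)) * al ^+ (c.1 == 1%N :> nat)
   * be ^+ (c.2 == 1%N :> nat)
   * ga ^+ ((c.1 == 2%N :> nat) + (c.2 == 2%N :> nat))%N.

Lemma card_midE n (P : mid n -> bool) :
  #|[set x | P x]| = (\sum_w P (true, w) + \sum_w P (false, w))%N.
Proof.
rewrite -sum1dep_card big_mkcond /=.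
transitivity (\sum_(b : bool) \sum_(w : vert n) (P (b, w) : nat))%N.
  by rewrite pair_big /=; apply: eq_bigr => -[b w] _; case: (P _).
by rewrite big_bool.
Qed.

Lemma sh1_inj n : injective (fun w : vert n => (w.1 + 1, w.2)).
Proof. move=> [a b] [c d] H; have e1 := congr1 (fun p => p.1 - 1) H; have e2 := congr1 snd H. by rewrite /= !addrK in e1 e2; rewrite e1 e2. Qed.
Lemma sh2_inj n : injective (fun w : vert n => (w.1, w.2 + 1)).
Proof. move=> [a b] [c d] H; have e1 := congr1 (fun p => p.2 - 1) H; have e2 := congr1 fst H. by rewrite /= !addrK in e1 e2; rewrite e1 e2. Qed.

Lemma weight (R : comRingType) (al be ga : R) n (g : {ffun vert n -> code}) :
  injectiveb (decf g) ->
  (-1) ^+ snakeS (hperm g) * al ^+ snakeA (hperm g) * be ^+ snakeB (hperm g)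
       * ga ^+ snakeC (hperm g) = \prod_v lw al be ga (g v).
Proof.
move=> hi; have hE := hpermE hi.
have eS : snakeS (hperm g) = (\sum_v ((g v).1 == 1%N :> nat) && ((g v).2 == 1%N :> nat) : nat)%N.
  rewrite /snakeS -sum1dep_card big_mkcond /=; apply: eq_bigr => -[v1 v2] _.
  by rewrite !hE PS; case: (_ && _).
have eA : snakeA (hperm g) = (\sum_v ((g v).1 == 1%N :> nat) : nat)%N.
  rewrite /snakeA card_midE.
  under eq_bigr do rewrite hE. under [X in (_ + X)%N]eq_bigr do rewrite hE.
  rewrite [X in (_ + X)%N]big1 ?addn0; last by move=> [w1 w2] _; case: (PA g w1 w2) => _ ->.
  rewrite [RHS](reindex_inj (@sh1_inj n)); apply: eq_bigr => -[w1 w2] _.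
  by case: (PA g w1 w2) => -> _.
have eB : snakeB (hperm g) = (\sum_v ((g v).2 == 1%N :> nat) : nat)%N.
  rewrite /snakeB card_midE.
  under eq_bigr do rewrite hE. under [X in (_ + X)%N]eq_bigr do rewrite hE.
  rewrite big1 ?add0n; last by move=> [w1 w2] _; case: (PB g w1 w2) => -> _.
  rewrite [RHS](reindex_inj (@sh2_inj n)); apply: eq_bigr => -[w1 w2] _.
  by case: (PB g w1 w2) => _ ->.
have eC : snakeC (hperm g) =
    (\sum_v (((g v).1 == 2%N :> nat) + ((g v).2 == 2%N :> nat)) : nat)%N.
  rewrite /snakeC card_midE big_split /=.
  under eq_bigr do rewrite hE. under [X in (_ + X)%N]eq_bigr do rewrite hE.
  congr (_ + _)%N.
    rewrite [RHS](reindex_inj (@sh1_inj n)); apply: eq_bigr => -[w1 w2] _.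
    by case: (PC g w1 w2) => -> _.
  rewrite [RHS](reindex_inj (@sh2_inj n)); apply: eq_bigr => -[w1 w2] _.
  by case: (PC g w1 w2) => _ ->.
rewrite eS eA eB eC /lw !big_split /= !prodrXr.
by rewrite [in RHS]big_split.
Qed.

Definition vw (R : comRingType) (a1 a2 b1 b2 c1 c2 : R) (hl hr vb vt : bool) : R :=
  match hl, hr, vb, vt with
  | true, true, true, true => a1
  | false, false, false, false => a2
  | true, true, false, false => b1
  | false, false, true, true => b2
  | true, false, false, true => c1
  | false, true, true, false => c2
  | _, _, _, _ => 0
  end.

Lemma local_sum (R : comRingType) (al be ga : R) hl hr vb vt :
  \sum_(c : code | Ploc c hl hr vb vt) lw al be ga c
  = vw 1 (ga ^+ 2 - al * be) be al ga ga hl hr vb vt.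
Proof.
rewrite big_mkcond.
have -> : forall F : code -> R, \sum_(c:code) F c = \sum_(i<3) \sum_(j<3) F (i,j).
  by move=> F; rewrite pair_big; apply: eq_bigr => -[].
rewrite /= !big_ord_recl !big_ord0 /=.
case: hl; case: hr; case: vb; case: vt; rewrite /Ploc /lw /= ?expr0 ?expr1 ?mulr1 ?mul1r ?addr0 ?add0r //.
by rewrite mulN1r mulNr addrC.
Qed.

Lemma ZGS_eq (R : comRingType) (al be ga : R) n :
  ZGS n al be ga = \sum_(s : {ffun mid n -> bool})
     \prod_v vweight 1 (ga ^+ 2 - al * be) be al ga ga s v.
Proof.
rewrite /ZGS (reindex_onto (@hperm n) (fun r : {perm mid n} => enc (fun x => r x))); last first.
  move=> r gs; have ed := dec_enc (fun x => forallP gs x).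
  have hi : injectiveb (decf (enc (fun x => r x))).
    by apply/injectiveP => y z; rewrite !ffunE !ed; exact: perm_inj.
  by apply/permP => x; rewrite hpermE // ed.
rewrite (eq_bigl (fun g : {ffun vert n -> code} => injectiveb (decf g))); last first.
  move=> g; case: (boolP (injectiveb (decf g))) => hi.
    rewrite (enc_ext (hpermE hi)) enc_dec eqxx andbT.
    by apply/forallP => x; rewrite hpermE //; exact: gs_dec.
  rewrite hpermN //; apply/negP => /andP[_ /eqP e]; move/negP: hi; apply.
  have ed : dec g =1 id.
    rewrite -e => x; rewrite dec_enc ?perm1 // => y; rewrite perm1 !inE eqxx.
    by case: (y.1).
  by apply/injectiveP => y z; rewrite !ffunE !ed.
rewrite (eq_bigr (fun g : {ffun vert n -> code} => \prod_v lw al be ga (g v))); last by move=> g hi; apply: weight.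
rewrite (partition_big (@staysf n) xpredT) //=.
apply: eq_bigr => s _.
rewrite (eq_bigl (fun g : {ffun vert n -> code} => g \in family (fun v => [pred c | Ploc c (hL s v) (hR s v) (vB s v) (vT s v)]))); last first.
  move=> g; rewrite L1 andbC L2; apply/forallP/familyP => H v; move: (H v); by rewrite inE.
rewrite -(bigA_distr_big_dep (fun v => [pred c | Ploc c (hL s v) (hR s v) (vB s v) (vT s v)]) (fun _ c => lw al be ga c)).
by apply: eq_bigr => v _; exact: local_sum.
Qed.

Unset Implicit Arguments. Set Strict Implicit.

Theorem corollary2p4 (R : realFieldType) (alpha beta gamma : R) (n : nat)
  (ha : 0 < alpha) (hb : 0 < beta) (hg : 0 < gamma)
  (hd : 0 < gamma ^+ 2 - alpha * beta) (hn : (2 <= n)%N) :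
  ZGS n alpha beta gamma
    = Z6 n 1 (gamma ^+ 2 - alpha * beta) beta alpha gamma gamma
  /\ 0 < ZGS n alpha beta gamma.
Proof.
have E : ZGS n alpha beta gamma
    = Z6 n 1 (gamma ^+ 2 - alpha * beta) beta alpha gamma gamma.
  rewrite ZGS_eq /Z6 [RHS]big_mkcond; apply: eq_bigr => s _.
  case: ifP => // /negbT /forallPn [v nv]; rewrite (bigD1 v) //=.
  suff -> : vweight 1 (gamma ^+ 2 - alpha * beta) beta alpha gamma gamma s v = 0 by rewrite mul0r.
  move: nv; rewrite /ice /vweight.
  by case: (hL s v); case: (hR s v); case: (vB s v); case: (vT s v).
split => //; rewrite E /Z6 (bigD1 [ffun _ => true]) /=; last first.
  by apply/forallP => v; rewrite /ice /hL /hR /vB /vT !ffunE.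
rewrite big1; last by move=> v _; rewrite /vweight /hL /hR /vB /vT !ffunE.
apply: (lt_le_trans ltr01); rewrite lerDl; apply: sumr_ge0 => s _.
apply: prodr_ge0 => v _; rewrite /vweight.
by case: (hL s v); case: (hR s v); case: (vB s v); case: (vT s v);
  first [exact: ler01 | exact: lexx | exact: ltW ha | exact: ltW hb | exact: ltW hg | exact: ltW hd].
Qed.
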